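(* Let $\kappa$ be a regular cardinal. For every $\alpha<\kappa^+$ there is a $\kappa$-Borel set $R_\alpha\subseteq\kappa^\kappa\times\kappa^\kappa$ which is universal for $\kappa$-$\Sigma_\alpha$, i.e. for every $A\in\kappa$-$\Sigma_\alpha$ there is $\xi\in\kappa^\kappa$ such that for all $\eta\in\kappa^\kappa$: $\eta\in A$ iff $(\eta,\xi)\in R_\alpha$.
   Context: Basic $\kappa$-open sets: $N_\eta=\{\zeta\in\kappa^\kappa\mid\eta\subseteq\zeta\}$ for $\eta:X\to\kappa$, $X\subseteq\kappa$, $|X|<\kappa$, and $\emptyset$; in $\kappa^\kappa\times\kappa^\kappa$ they are products $N_\eta\times N_\xi$. The $\kappa$-Borel sets form the smallest class containing the basic $\kappa$-open sets and closed under complements and unions and intersections of at most $\kappa$ sets. Hierarchy: $\kappa$-$\Sigma_0$ is the collection of sets $N_{\{(i,j)\}}=\{f\in\kappa^\kappa\mid f(i)=j\}$, $i,j<\kappa$. If $\alpha$ is even, $\kappa$-$\Sigma_{\alpha+1}$ is the collection of unions of $\kappa$ many $\kappa$-$\Sigma_\alpha$ sets; if $\alpha$ is odd, $\kappa$-$\Sigma_{\alpha+1}$ is the collection of intersections of $\kappa$ many $\kappa$-$\Sigma_\alpha$ sets; if $\alpha$ is a limit, $\kappa$-$\Sigma_\alpha=\bigcup_{\beta<\alpha}\kappa$-$\Sigma_\beta$. (An ordinal is even/odd according to the parity of its finite part.) *)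

(* Defs.v *)
Definition injective {A B : Type} (f : A -> B) : Prop :=
  forall x y, f x = f y -> x = y.

Definition card_le (A B : Type) : Prop := exists f : A -> B, injective f.

Definition card_lt (A B : Type) : Prop := card_le A B /\ ~ card_le B A.

Definition small {K : Type} (X : K -> Prop) : Prop := card_lt {x : K | X x} K.

(** K (viewed as the cardinal kappa = |K|) is an infinite regular cardinal:
    kappa is not the union of fewer than kappa sets each of size < kappa. *)
Definition regular (K : Type) : Prop :=
  card_le nat K /\
  forall (I : Type) (F : I -> K -> Prop),
    card_lt I K -> (forall i, small (F i)) -> exists x : K, forall i, ~ F i x.

(** zeta extends the partial function eta = h restricted to X *)
Definition extends {K : Type} (X : K -> Prop) (h : K -> K) (zeta : K -> K) : Prop :=
  forall x, X x -> zeta x = h x.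

(** kappa-Borel subsets of kappa^kappa x kappa^kappa: smallest class containing
    the basic open sets N_eta x N_xi (|dom eta|, |dom xi| < kappa) and the empty
    set, closed under complements and unions / intersections of at most kappa sets.
    (Membership is stated up to extensional equality of sets.) *)
Inductive BorelP (K : Type) : ((K -> K) * (K -> K) -> Prop) -> Prop :=
| BP_basic (X1 : K -> Prop) (h1 : K -> K) (X2 : K -> Prop) (h2 : K -> K)
    (A : (K -> K) * (K -> K) -> Prop) :
    small X1 -> small X2 ->
    (forall p, A p <-> (extends X1 h1 (fst p) /\ extends X2 h2 (snd p))) ->
    BorelP K A
| BP_empty (A : (K -> K) * (K -> K) -> Prop) :
    (forall p, ~ A p) -> BorelP K A
| BP_compl (A B : (K -> K) * (K -> K) -> Prop) :
    BorelP K B -> (forall p, A p <-> ~ B p) -> BorelP K A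
| BP_union (I : Type) (F : I -> (K -> K) * (K -> K) -> Prop)
    (A : (K -> K) * (K -> K) -> Prop) :
    card_le I K -> (forall i, BorelP K (F i)) ->
    (forall p, A p <-> exists i, F i p) -> BorelP K A
| BP_inter (I : Type) (F : I -> (K -> K) * (K -> K) -> Prop)
    (A : (K -> K) * (K -> K) -> Prop) :
    card_le I K -> (forall i, BorelP K (F i)) ->
    (forall p, A p <-> forall i, F i p) -> BorelP K A.

(** An ordinal alpha < kappa^+ is represented as (the order type of) a strict
    well-order [lt] on a type T with |T| <= kappa. The ordinals beta <= alpha are
    represented by [option T]: [Some t] is the order type of {s | lt s t},
    [None] is alpha itself. *)
Definition well_order {T : Type} (lt : T -> T -> Prop) : Prop :=
  (forall a, ~ lt a a) /\
  (forall a b c, lt a b -> lt b c -> lt a c) /\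
  (forall a b, lt a b \/ a = b \/ lt b a) /\
  well_founded lt.

Definition olt {T : Type} (lt : T -> T -> Prop) (x y : option T) : Prop :=
  match x, y with
  | Some a, Some b => lt a b
  | Some _, None => True
  | None, _ => False
  end.

Definition is_zero {T} (lt : T -> T -> Prop) (b : option T) : Prop :=
  forall g, ~ olt lt g b.

Definition is_succ_of {T} (lt : T -> T -> Prop) (b g : option T) : Prop :=
  olt lt g b /\ forall d, olt lt d b -> d = g \/ olt lt d g.

Definition is_limit {T} (lt : T -> T -> Prop) (b : option T) : Prop :=
  (exists g, olt lt g b) /\
  forall g, olt lt g b -> exists d, olt lt g d /\ olt lt d b.

(** Parity of an ordinal = parity of its finite part
    (0 and limits are even; beta+1 has the opposite parity of beta). *)
Inductive even_ord {T} (lt : T -> T -> Prop) : option T -> Prop :=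
| ev_zero b : is_zero lt b -> even_ord lt b
| ev_limit b : is_limit lt b -> even_ord lt b
| ev_succ b g : is_succ_of lt b g -> odd_ord lt g -> even_ord lt b
with odd_ord {T} (lt : T -> T -> Prop) : option T -> Prop :=
| od_succ b g : is_succ_of lt b g -> even_ord lt g -> odd_ord lt b.

Inductive Sigma (K : Type) {T : Type} (lt : T -> T -> Prop)
  : option T -> ((K -> K) -> Prop) -> Prop :=
| Sig_zero b (i j : K) (A : (K -> K) -> Prop) :
    is_zero lt b -> (forall f, A f <-> f i = j) -> Sigma K lt b A
| Sig_succ_even b g (F : K -> (K -> K) -> Prop) (A : (K -> K) -> Prop) :
    is_succ_of lt b g -> even_ord lt g -> (forall k, Sigma K lt g (F k)) ->
    (forall f, A f <-> exists k, F k f) -> Sigma K lt b A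
| Sig_succ_odd b g (F : K -> (K -> K) -> Prop) (A : (K -> K) -> Prop) :
    is_succ_of lt b g -> odd_ord lt g -> (forall k, Sigma K lt g (F k)) ->
    (forall f, A f <-> forall k, F k f) -> Sigma K lt b A
| Sig_limit b g (A : (K -> K) -> Prop) :
    is_limit lt b -> olt lt g b -> Sigma K lt g A -> Sigma K lt b A.

(* Main.v *)
Require Import Defs.
From Stdlib Require Import Classical ClassicalEpsilon ProofIrrelevance FunctionalExtensionality PropExtensionality.
From mathcomp Require classical_sets.

Lemma my_zorn (T:Type) (P : (T->Prop) -> Prop) :
  (forall F : (T->Prop)->Prop, (forall X, F X -> P X) ->
     (forall X Y, F X -> F Y -> (forall t, X t -> Y t) \/ (forall t, Y t -> X t)) ->
     P (fun t => exists X, F X /\ X t)) ->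
  exists A, P A /\ forall B, (forall t, A t -> B t) -> P B -> forall t, B t -> A t.
Proof.
  intros H.
  destruct (@classical_sets.Zorn_bigcup T P) as [A [PA HA]].
  - intros F HF Htot.
    assert (E : classical_sets.bigcup F (fun X => X) = (fun t => exists X, F X /\ X t)).
    { unfold classical_sets.bigcup, classical_sets.mkset.
      apply functional_extensionality; intro t.
      apply propositional_extensionality; split.
      - intros [X H1 H2]; eauto.
      - intros [X [H1 H2]]; eauto. }
    change (P (classical_sets.bigcup F (fun X => X))). rewrite E. apply H.
    + exact HF.
    + intros X Y HX HY. destruct (Htot X Y HX HY); [left|right]; exact H0.
  - exists A; split; [exact PA|].
    intros B HAB PB t Bt. apply NNPP; intro nA.
    apply (HA B); [|exact PB].
    split; [exact HAB|]. intro HBA. apply nA. apply HBA. exact Bt.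
Qed.
Lemma choice_fun {A B : Type} (b0 : B) (R : A -> B -> Prop) :
  exists g : A -> B, forall x, (exists y, R x y) -> R x (g x).
Proof.
  exists (fun x => match excluded_middle_informative (exists y, R x y) with
                   | left H => proj1_sig (constructive_indefinite_description _ H)
                   | right _ => b0 end).
  intros x Hx. destruct (excluded_middle_informative (exists y, R x y)) as [H|H].
  - exact (proj2_sig (constructive_indefinite_description _ H)).
  - contradiction.
Qed.

Lemma compar (K : Type) (k0 : K) (X Y : K -> Prop) :
  (exists g : K -> K, (forall x, X x -> Y (g x)) /\
     (forall x y, X x -> X y -> g x = g y -> x = y)) \/
  (exists g : K -> K, (forall y, Y y -> X (g y)) /\
     (forall x y, Y x -> Y y -> g x = g y -> x = y)).
Proof.
  pose (P := fun G : K * K -> Prop =>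
    (forall x y, G (x, y) -> X x /\ Y y) /\
    (forall x y y', G (x, y) -> G (x, y') -> y = y') /\
    (forall x x' y, G (x, y) -> G (x', y) -> x = x')).
  destruct (@my_zorn (K * K) P) as [M [[HM1 [HM2 HM3]] Hmax]].
  - intros F HF Htot. split; [|split].
    + intros x y [G [FG Gxy]]. exact (proj1 (HF G FG) x y Gxy).
    + intros x y y' [G1 [F1 G1x]] [G2 [F2 G2x]].
      destruct (Htot G1 G2 F1 F2) as [S|S].
      * exact (proj1 (proj2 (HF G2 F2)) x y y' (S _ G1x) G2x).
      * exact (proj1 (proj2 (HF G1 F1)) x y y' G1x (S _ G2x)).
    + intros x x' y [G1 [F1 G1x]] [G2 [F2 G2x]].
      destruct (Htot G1 G2 F1 F2) as [S|S].
      * exact (proj2 (proj2 (HF G2 F2)) x x' y (S _ G1x) G2x).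
      * exact (proj2 (proj2 (HF G1 F1)) x x' y G1x (S _ G2x)).
  - destruct (classic (forall x, X x -> exists y, M (x, y))) as [Hl|Hl].
    + left. destruct (choice_fun k0 (fun x y => M (x, y))) as [g Hg].
      exists g. split.
      * intros x Xx. exact (proj2 (HM1 _ _ (Hg x (Hl x Xx)))).
      * intros x y Xx Xy E. apply (HM3 x y (g x)); [apply Hg; auto|].
        rewrite E. apply Hg; auto.
    + destruct (classic (forall y, Y y -> exists x, M (x, y))) as [Hr|Hr].
      * right. destruct (choice_fun k0 (fun y x => M (x, y))) as [g Hg].
        exists g. split.
        -- intros y Yy. exact (proj1 (HM1 _ _ (Hg y (Hr y Yy)))).
        -- intros x y Yx Yy E. apply (HM2 (g x) x y); [apply Hg; auto|].
           rewrite E. apply Hg; auto.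
      * exfalso.
        apply not_all_ex_not in Hl. destruct Hl as [x0 Hx0].
        apply imply_to_and in Hx0. destruct Hx0 as [Xx0 nx0].
        apply not_all_ex_not in Hr. destruct Hr as [y0 Hy0].
        apply imply_to_and in Hy0. destruct Hy0 as [Yy0 ny0].
        pose (M' := fun u : K * K => M u \/ u = (x0, y0)).
        assert (PM' : P M').
        { split; [|split].
          - intros x y [H|H]; [auto|]. injection H; intros; subst; auto.
          - intros x y y' [H|H] [H'|H'].
            + eauto.
            + injection H'; intros; subst. exfalso; apply nx0; eauto.
            + injection H; intros; subst. exfalso; apply nx0; eauto.
            + injection H; injection H'; intros; subst; auto.
          - intros x x' y [H|H] [H'|H'].
            + eauto.
            + injection H'; intros; subst. exfalso; apply ny0; eauto.
            + injection H; intros; subst. exfalso; apply ny0; eauto.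
            + injection H; injection H'; intros; subst; auto. }
        assert (HM : M (x0, y0)).
        { apply (Hmax M' (fun t Ht => or_introl Ht) PM'). right; reflexivity. }
        apply nx0; eauto.
Qed.
From Stdlib Require Import Cantor.

Definition pairN (m n : nat) : nat := Cantor.to_nat (m, n).
Lemma pairN_inj m n m' n' : pairN m n = pairN m' n' -> m = m' /\ n = n'.
Proof.
  unfold pairN. intro E. assert (E2 := f_equal Cantor.of_nat E).
  rewrite !Cantor.cancel_of_to in E2. injection E2; auto.
Qed.

Section HessDefs.
End HessDefs.

Definition hdom {K : Type} (G : (K * K) * K -> Prop) (a : K) : Prop :=
  exists c, G ((a, a), c).

Definition hgood {K : Type} (G : (K * K) * K -> Prop) : Prop :=
  (forall a b c c', G ((a, b), c) -> G ((a, b), c') -> c = c') /\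
  (forall a b c a' b', G ((a, b), c) -> G ((a', b'), c) -> a = a' /\ b = b') /\
  (forall a b, (exists c, G ((a, b), c)) <-> (hdom G a /\ hdom G b)) /\
  (forall a b c, G ((a, b), c) -> hdom G c).

Lemma hess (K : Type) (iota : nat -> K)
  (Hi : forall m n, iota m = iota n -> m = n) :
  exists psi : K * K -> K, forall u v, psi u = psi v -> u = v.
Proof.
  pose (G0 := fun u : (K * K) * K => exists m n,
     fst (fst u) = iota m /\ snd (fst u) = iota n /\ snd u = iota (pairN m n)).
  pose (P := fun G : (K * K) * K -> Prop =>
     ((forall u, ~ G u) \/ (forall u, G0 u -> G u)) /\ hgood G).
  assert (PG0 : P G0).
  { split; [right; auto|]. split; [|split; [|split]].
    - intros a b c c' [m [n [H1 [H2 H3]]]] [m' [n' [H1' [H2' H3']]]]; simpl in *.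
      subst. apply Hi in H1'. apply Hi in H2'. subst. reflexivity.
    - intros a b c a' b' [m [n [H1 [H2 H3]]]] [m' [n' [H1' [H2' H3']]]]; simpl in *.
      subst. apply Hi in H3'. apply pairN_inj in H3'. destruct H3'; subst; auto.
    - intros a b; split.
      + intros [c [m [n [H1 [H2 H3]]]]]; simpl in *. split.
        * exists (iota (pairN m m)). exists m, m. simpl. auto.
        * exists (iota (pairN n n)). exists n, n. simpl. auto.
      + intros [[c [m [m' [H1 [H2 H3]]]]] [c' [n [n' [H1' [H2' H3']]]]]]; simpl in *.
        exists (iota (pairN m n)). exists m, n. simpl. auto.
    - intros a b c [m [n [H1 [H2 H3]]]]; simpl in *.
      exists (iota (pairN (pairN m n) (pairN m n))). exists (pairN m n), (pairN m n).
      simpl. auto. }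
  destruct (@my_zorn _ P) as [M [[HMs HMg] Hmax]].
  - intros F HF Htot.
    pose (U := fun u => exists X, F X /\ X u).
    assert (domU : forall a, hdom U a <-> exists X, F X /\ hdom X a).
    { intro a; split.
      - intros [c [X [FX Xc]]]. exists X; split; [auto|exists c; auto].
      - intros [X [FX [c Xc]]]. exists c, X. auto. }
    split.
    + destruct (classic (exists X u, F X /\ X u)) as [[X [u [FX Xu]]]|Hn].
      * right. intros v G0v. exists X. split; [auto|].
        destruct (proj1 (HF X FX)) as [He|Hs]; [exfalso; exact (He u Xu)|auto].
      * left. intros u [X [FX Xu]]. apply Hn. eauto.
    + split; [|split; [|split]].
      * intros a b c c' [X1 [F1 X1c]] [X2 [F2 X2c]].
        destruct (Htot X1 X2 F1 F2) as [S|S].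
        -- exact (proj1 (proj2 (HF X2 F2)) a b c c' (S _ X1c) X2c).
        -- exact (proj1 (proj2 (HF X1 F1)) a b c c' X1c (S _ X2c)).
      * intros a b c a' b' [X1 [F1 X1c]] [X2 [F2 X2c]].
        destruct (Htot X1 X2 F1 F2) as [S|S].
        -- exact (proj1 (proj2 (proj2 (HF X2 F2))) a b c a' b' (S _ X1c) X2c).
        -- exact (proj1 (proj2 (proj2 (HF X1 F1))) a b c a' b' X1c (S _ X2c)).
      * intros a b; split.
        -- intros [c [X [FX Xc]]].
           destruct (proj1 (proj1 (proj2 (proj2 (proj2 (HF X FX)))) a b) (ex_intro _ c Xc))
             as [Ha Hb].
           split; apply domU; exists X; auto.
        -- intros [Ha Hb]. apply domU in Ha. apply domU in Hb.
           destruct Ha as [X1 [F1 [c1 H1]]]. destruct Hb as [X2 [F2 [c2 H2]]].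
           destruct (Htot X1 X2 F1 F2) as [S|S].
           ++ destruct (proj2 (proj1 (proj2 (proj2 (proj2 (HF X2 F2)))) a b)
                 (conj (ex_intro _ c1 (S _ H1)) (ex_intro _ c2 H2))) as [c Hc].
              exists c, X2. auto.
           ++ destruct (proj2 (proj1 (proj2 (proj2 (proj2 (HF X1 F1)))) a b)
                 (conj (ex_intro _ c1 H1) (ex_intro _ c2 (S _ H2)))) as [c Hc].
              exists c, X1. auto.
      * intros a b c [X [FX Xc]].
        destruct (proj2 (proj2 (proj2 (proj2 (HF X FX)))) a b c Xc) as [d Hd].
        exists d, X. auto.
  -
    assert (HG0M : forall u, G0 u -> M u).
    { destruct HMs as [He|Hs]; [|exact Hs].
      apply (Hmax G0); [intros t Ht; exfalso; exact (He t Ht)|exact PG0]. }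
    clear HMs.
    destruct HMg as [Mfun [Minj [Msq Mrg]]].
    pose (B := hdom M).
    assert (Bi : forall n, B (iota n)).
    { intro n. exists (iota (pairN n n)). apply HG0M. exists n, n. simpl. auto. }
    destruct (choice_fun (iota 0) (fun (u : K * K) c => M (u, c))) as [f0 Hf0].
    pose (f := fun a b => f0 (a, b)).
    assert (Hf : forall a b, B a -> B b -> M ((a, b), f a b)).
    { intros a b Ba Bb. apply Hf0. apply (proj2 (Msq a b)). split; auto. }
    assert (fB : forall a b, B a -> B b -> B (f a b)).
    { intros a b Ba Bb. exact (Mrg _ _ _ (Hf a b Ba Bb)). }
    assert (finj : forall a b a' b', B a -> B b -> B a' -> B b' -> f a b = f a' b' ->
                     a = a' /\ b = b').
    { intros a b a' b' Ba Bb Ba' Bb' E. apply (Minj a b (f a b) a' b' (Hf a b Ba Bb)).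
      rewrite E. apply Hf; auto. }
    assert (i01 : iota 0 <> iota 1) by (intro E; apply Hi in E; discriminate).
    destruct (compar _ (iota 0) B (fun x => ~ B x)) as [[g [gB ginj]]|[g [gB ginj]]].
    + (* B embeds into its complement: contradiction with maximality *)
      exfalso.
      pose (C := fun a => exists x, B x /\ g x = a).
      assert (CB : forall a, C a -> ~ B a).
      { intros a [x [Bx E]]. subst. apply gB; auto. }
      pose (cs := fun a b a' b' (t : nat) =>
         (B a /\ C b /\ a' = a /\ g b' = b /\ t = 0) \/
         (C a /\ B b /\ g a' = a /\ b' = b /\ t = 1) \/
         (C a /\ C b /\ g a' = a /\ g b' = b /\ t = 2)).
      pose (N := fun u : (K * K) * K => exists a' b' t, B a' /\ B b' /\
         cs (fst (fst u)) (snd (fst u)) a' b' t /\ snd u = g (f (f a' b') (iota t))).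
      pose (M' := fun u => M u \/ N u).
      assert (MB : forall a b c, M ((a, b), c) -> B a /\ B b).
      { intros a b c H. apply (proj1 (Msq a b)). eauto. }
      assert (NnB : forall a b c, N ((a, b), c) -> ~ (B a /\ B b)).
      { intros a b c [a' [b' [t [_ [_ [Hc _]]]]]] [Ba Bb]; simpl in Hc.
        destruct Hc as [[_ [Cb _]]|[[Ca _]|[Ca _]]].
        - exact (CB _ Cb Bb).
        - exact (CB _ Ca Ba).
        - exact (CB _ Ca Ba). }
      assert (csdet : forall a b a1 b1 t1 a2 b2 t2, B a1 -> B b1 -> B a2 -> B b2 ->
                 cs a b a1 b1 t1 -> cs a b a2 b2 t2 -> a1 = a2 /\ b1 = b2 /\ t1 = t2).
      { intros a b a1 b1 t1 a2 b2 t2 Ba1 Bb1 Ba2 Bb2 H1 H2.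
        destruct H1 as [[Ha [Hb [E1 [E2 E3]]]]|[[Ha [Hb [E1 [E2 E3]]]]|[Ha [Hb [E1 [E2 E3]]]]]];
        destruct H2 as [[Ha' [Hb' [E1' [E2' E3']]]]|[[Ha' [Hb' [E1' [E2' E3']]]]|[Ha' [Hb' [E1' [E2' E3']]]]]];
        subst;
        first [ exfalso; apply (CB _ Ha); assumption
              | exfalso; apply (CB _ Hb); assumption
              | exfalso; apply (CB _ Ha'); assumption
              | exfalso; apply (CB _ Hb'); assumption
              | idtac ].
        - repeat split; auto.
        - repeat split; auto.
        - repeat split; auto. }
      assert (csinv : forall a1 b1 a2 b2 a b t, cs a1 b1 a b t -> cs a2 b2 a b t ->
                  a1 = a2 /\ b1 = b2).
      { intros a1 b1 a2 b2 a b t H1 H2.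
        destruct H1 as [[Ha [Hb [E1 [E2 E3]]]]|[[Ha [Hb [E1 [E2 E3]]]]|[Ha [Hb [E1 [E2 E3]]]]]];
        destruct H2 as [[Ha' [Hb' [E1' [E2' E3']]]]|[[Ha' [Hb' [E1' [E2' E3']]]]|[Ha' [Hb' [E1' [E2' E3']]]]]];
        subst; try discriminate; auto. }
      assert (PM' : P M').
      { split; [right; intros u H; left; auto|].
        assert (domM' : forall a, hdom M' a <-> B a \/ C a).
        { intro a; split.
          - intros [c [H|[a' [b' [t [Ba' [Bb' [Hc _]]]]]]]].
            + left. exact (proj1 (MB _ _ _ H)).
            + simpl in Hc. right.
              destruct Hc as [[_ [Cb _]]|[[Ca _]|[Ca _]]]; auto.
          - intros [Ba|[x [Bx E]]].
            + destruct Ba as [c Hc]. exists c. left; auto.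
            + exists (g (f (f x x) (iota 2))). right. exists x, x, 2.
              repeat split; auto. simpl. right; right. repeat split; auto; exists x; auto. }
        split; [|split; [|split]].
        - intros a b c c' [H|H] [H'|H'].
          + eauto.
          + exfalso. apply (NnB _ _ _ H'). eauto.
          + exfalso. apply (NnB _ _ _ H). eauto.
          + destruct H as [a1 [b1 [t1 [Ba1 [Bb1 [Hc1 E1]]]]]].
            destruct H' as [a2 [b2 [t2 [Ba2 [Bb2 [Hc2 E2]]]]]]. simpl in *.
            destruct (csdet _ _ _ _ _ _ _ _ Ba1 Bb1 Ba2 Bb2 Hc1 Hc2) as [-> [-> ->]].
            congruence.
        - intros a b c a' b' [H|H] [H'|H'].
          + eauto.
          + exfalso. destruct H' as [a2 [b2 [t2 [Ba2 [Bb2 [Hc2 E2]]]]]]. simpl in E2.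
            subst c. apply (gB (f (f a2 b2) (iota t2))); [auto|].
            exact (Mrg _ _ _ H).
          + exfalso. destruct H as [a2 [b2 [t2 [Ba2 [Bb2 [Hc2 E2]]]]]]. simpl in E2.
            subst c. apply (gB (f (f a2 b2) (iota t2))); [auto|].
            exact (Mrg _ _ _ H').
          + destruct H as [a1 [b1 [t1 [Ba1 [Bb1 [Hc1 E1]]]]]].
            destruct H' as [a2 [b2 [t2 [Ba2 [Bb2 [Hc2 E2]]]]]]. simpl in *.
            rewrite E1 in E2. apply ginj in E2; [|auto|auto].
            apply finj in E2; auto. destruct E2 as [E2 E3].
            apply Hi in E3. apply finj in E2; auto. destruct E2. subst.
            eapply csinv; eauto.
        - intros a b. rewrite (domM' a), (domM' b). split.
          + intros [c [H|H]].
            * destruct (MB _ _ _ H); auto.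
            * destruct H as [a1 [b1 [t1 [Ba1 [Bb1 [Hc1 E1]]]]]]. simpl in Hc1.
              destruct Hc1 as [[Ha [Hb _]]|[[Ha [Hb _]]|[Ha [Hb _]]]]; auto.
          + intros [[Ba|Ca] [Bb|Cb]].
            * destruct (proj2 (Msq a b) (conj Ba Bb)) as [c Hc]. exists c; left; auto.
            * destruct Cb as [y [By Ey]]. exists (g (f (f a y) (iota 0))). right.
              exists a, y, 0. repeat split; auto. simpl. left. repeat split; auto.
              exists y; auto.
            * destruct Ca as [x [Bx Ex]]. exists (g (f (f x b) (iota 1))). right.
              exists x, b, 1. repeat split; auto. simpl. right; left. repeat split; auto.
              exists x; auto.
            * destruct Ca as [x [Bx Ex]]. destruct Cb as [y [By Ey]].
              exists (g (f (f x y) (iota 2))). right.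
              exists x, y, 2. repeat split; auto. simpl. right; right.
              repeat split; auto; [exists x|exists y]; auto.
        - intros a b c [H|H].
          + apply domM'. left. exact (Mrg _ _ _ H).
          + apply domM'. right. destruct H as [a1 [b1 [t1 [Ba1 [Bb1 [Hc1 E1]]]]]].
            simpl in E1. exists (f (f a1 b1) (iota t1)). split; auto. }
      assert (c0C : C (g (iota 0))) by (exists (iota 0); auto).
      assert (HN : M' ((g (iota 0), g (iota 0)), g (f (f (iota 0) (iota 0)) (iota 2)))).
      { right. exists (iota 0), (iota 0), 2. repeat split; auto. simpl. right; right.
        repeat split; auto. }
      apply (Hmax M' (fun t Ht => or_introl Ht) PM') in HN.
      apply (CB _ c0C). exact (proj1 (MB _ _ _ HN)).
    +
      pose (phi := fun x => match excluded_middle_informative (B x) with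
                            | left _ => f x (iota 0) | right _ => f (g x) (iota 1) end).
      assert (phiB : forall x, B (phi x)).
      { intro x. unfold phi. destruct (excluded_middle_informative (B x)); auto. }
      assert (phiinj : forall x y, phi x = phi y -> x = y).
      { intros x y. unfold phi.
        destruct (excluded_middle_informative (B x)) as [Bx|Bx];
        destruct (excluded_middle_informative (B y)) as [By|By]; intro E.
        - apply finj in E; auto. tauto.
        - apply finj in E; auto. destruct E as [_ E]. contradiction.
        - apply finj in E; auto. destruct E as [_ E]. symmetry in E. contradiction.
        - apply finj in E; auto. destruct E as [E _]. apply ginj in E; auto. }
      exists (fun u => f (phi (fst u)) (phi (snd u))).
      intros [x y] [x' y'] E. simpl in E. apply finj in E; auto.
      destruct E as [E1 E2]. apply phiinj in E1. apply phiinj in E2. subst; auto.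
Qed.

Lemma sig_inj {A : Type} (P : A -> Prop) (x y : {a | P a}) :
  proj1_sig x = proj1_sig y -> x = y.
Proof.
  destruct x as [x Hx], y as [y Hy]; simpl; intro E; subst.
  f_equal. apply proof_irrelevance.
Qed.

Lemma small_empty (K : Type) (k0 : K) : small (fun _ : K => False).
Proof.
  split.
  - exists (fun x => proj1_sig x). intros x y E. apply sig_inj. exact E.
  - intros [f _]. exact (proj2_sig (f k0)).
Qed.

Lemma small_single (K : Type) (k0 k1 : K) (H01 : k0 <> k1) (a : K) :
  small (fun x : K => x = a).
Proof.
  split.
  - exists (fun x => proj1_sig x). intros x y E. apply sig_inj. exact E.
  - intros [f Hf]. apply H01. apply Hf. apply sig_inj.
    rewrite (proj2_sig (f k0)), (proj2_sig (f k1)). reflexivity.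
Qed.

Lemma small_image (K : Type) (k0 : K) (X : K -> Prop) (q : K -> K) (Hq : injective q) :
  small X -> small (fun y => exists x, X x /\ q x = y).
Proof.
  intros [_ HX]. split.
  - exists (fun x => proj1_sig x). intros x y E. apply sig_inj. exact E.
  - intros [f Hf]. apply HX.
    destruct (choice_fun k0 (fun y x => X x /\ q x = y)) as [inv Hinv].
    exists (fun k => exist X (inv (proj1_sig (f k))) (proj1 (Hinv _ (proj2_sig (f k))))).
    intros k k' E. apply Hf. apply sig_inj.
    apply (f_equal (@proj1_sig _ _)) in E. simpl in E.
    rewrite <- (proj2 (Hinv _ (proj2_sig (f k)))).
    rewrite <- (proj2 (Hinv _ (proj2_sig (f k')))).
    rewrite E. reflexivity.
Qed.

Definition PP (K : Type) := ((K -> K) * (K -> K) -> Prop).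

Lemma Borel_ext (K : Type) (k0 : K) (A B : PP K) :
  BorelP K A -> (forall p, B p <-> A p) -> BorelP K B.
Proof.
  intros HA E. apply (BP_union K unit (fun _ => A)).
  - exists (fun _ => k0). intros [] [] _; reflexivity.
  - intros; exact HA.
  - intro p. rewrite E. split; [intro H; exists tt; exact H|intros [_ H]; exact H].
Qed.

Lemma card_bool (K : Type) (k0 k1 : K) (H01 : k0 <> k1) : card_le bool K.
Proof.
  exists (fun b : bool => if b then k0 else k1).
  intros [] [] E; auto; exfalso; auto.
Qed.

Lemma Borel_and (K : Type) (k0 k1 : K) (H01 : k0 <> k1) (A B : PP K) :
  BorelP K A -> BorelP K B -> BorelP K (fun p => A p /\ B p).
Proof.
  intros HA HB. apply (BP_inter K bool (fun b => if b then A else B)).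
  - exact (card_bool K k0 k1 H01).
  - intros []; assumption.
  - intro p. split.
    + intros [H1 H2] []; assumption.
    + intro H. exact (conj (H true) (H false)).
Qed.

Lemma Borel_or (K : Type) (k0 k1 : K) (H01 : k0 <> k1) (A B : PP K) :
  BorelP K A -> BorelP K B -> BorelP K (fun p => A p \/ B p).
Proof.
  intros HA HB. apply (BP_union K bool (fun b => if b then A else B)).
  - exact (card_bool K k0 k1 H01).
  - intros []; assumption.
  - intro p. split.
    + intros [H|H]; [exists true|exists false]; exact H.
    + intros [[] H]; [left|right]; exact H.
Qed.

Lemma Borel_ex (K I : Type) (HI : card_le I K) (F : I -> PP K) :
  (forall i, BorelP K (F i)) -> BorelP K (fun p => exists i, F i p).
Proof.
  intros HF. apply (BP_union K I F _ HI HF). intro p; reflexivity.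
Qed.

Lemma Borel_all (K I : Type) (HI : card_le I K) (F : I -> PP K) :
  (forall i, BorelP K (F i)) -> BorelP K (fun p => forall i, F i p).
Proof.
  intros HF. apply (BP_inter K I F _ HI HF). intro p; reflexivity.
Qed.

Lemma Borel_fst (K : Type) (k0 k1 : K) (H01 : k0 <> k1) (x y : K) :
  BorelP K (fun p => fst p x = y).
Proof.
  apply (BP_basic K (fun z => z = x) (fun _ => y) (fun _ => False) (fun z => z)).
  - apply small_single with k0 k1; exact H01.
  - exact (small_empty K k0).
  - intro p. unfold extends. split.
    + intro H. split; [intros z Hz; rewrite Hz; exact H|intros _ []].
    + intros [H _]. apply H. reflexivity.
Qed.

Lemma Borel_snd (K : Type) (k0 k1 : K) (H01 : k0 <> k1) (x y : K) :
  BorelP K (fun p => snd p x = y).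
Proof.
  apply (BP_basic K (fun _ => False) (fun z => z) (fun z => z = x) (fun _ => y)).
  - exact (small_empty K k0).
  - apply small_single with k0 k1; exact H01.
  - intro p. unfold extends. split.
    + intro H. split; [intros _ []|intros z Hz; rewrite Hz; exact H].
    + intros [_ H]. apply H. reflexivity.
Qed.

Lemma Borel_pre (K : Type) (k0 : K) (q : K -> K) (Hq : injective q) (A : PP K) :
  BorelP K A -> BorelP K (fun p => A (fst p, fun x => snd p (q x))).
Proof.
  intro HA.
  induction HA as [X1 h1 X2 h2 A0 S1 S2 HA|A0 HA|A0 B HB IH HA|I F A0 HI HF IH HA|I F A0 HI HF IH HA].
  - destruct (choice_fun k0 (fun y x => q x = y)) as [qi Hqi].
    assert (qiq : forall x, qi (q x) = x).
    { intro x. apply Hq. apply Hqi. exists x; reflexivity. }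
    apply (BP_basic K X1 h1 (fun y => exists x, X2 x /\ q x = y) (fun y => h2 (qi y))).
    + exact S1.
    + apply small_image; assumption.
    + intro p. rewrite HA. simpl. unfold extends. split.
      * intros [H1 H2]. split; [exact H1|].
        intros y [x [Hx Ey]]. subst y. rewrite qiq. apply H2; exact Hx.
      * intros [H1 H2]. split; [exact H1|].
        intros x Hx. rewrite <- (qiq x) at 2. apply H2. exists x; auto.
  - apply BP_empty. intro p. apply HA.
  - apply (BP_compl K _ _ IH). intro p. apply HA.
  - apply (BP_union K I _ _ HI IH). intro p. apply HA.
  - apply (BP_inter K I _ _ HI IH). intro p. apply HA.
Qed.

Lemma olt_wf (T : Type) (lt : T -> T -> Prop) :
  well_founded lt -> well_founded (olt lt).
Proof.
  intro Hwf.
  assert (HS : forall t, Acc (olt lt) (Some t)).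
  { intro t. induction (Hwf t) as [t _ IH]. constructor.
    intros [s|] H; simpl in H; [apply IH; exact H|contradiction]. }
  intros [t|]; [apply HS|]. constructor. intros [s|] H; [apply HS|contradiction].
Qed.

Lemma build (K D : Type) (phi : D -> K) (Hphi : injective phi) (g : D -> K) :
  exists xi : K -> K, forall d, xi (phi d) = g d.
Proof.
  exists (fun z => match excluded_middle_informative (exists d, phi d = z) with
                   | left H => g (proj1_sig (constructive_indefinite_description _ H))
                   | right _ => z end).
  intro d. destruct (excluded_middle_informative (exists d', phi d' = phi d)) as [H|H].
  - destruct (constructive_indefinite_description _ H) as [d' Hd']. simpl.
    f_equal. apply Hphi. exact Hd'.
  - exfalso. apply H. exists d. reflexivity.
Qed.

Lemma Sigma_inv (K T : Type) (lt : T -> T -> Prop) (b : option T) (A : (K -> K) -> Prop) :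
  Sigma K lt b A ->
  (exists i j, forall f, A f <-> f i = j) \/
  (exists t (F : K -> (K -> K) -> Prop), olt lt (Some t) b /\
     (forall k, Sigma K lt (Some t) (F k)) /\ (forall f, A f <-> exists k, F k f)) \/
  (exists t (F : K -> (K -> K) -> Prop), olt lt (Some t) b /\
     (forall k, Sigma K lt (Some t) (F k)) /\ (forall f, A f <-> forall k, F k f)) \/
  (exists t, olt lt (Some t) b /\ Sigma K lt (Some t) A).
Proof.
  intro H. destruct H as [b i j A Hz HA|b g F A Hs He HF HA|b g F A Hs Ho HF HA|b g A Hl Hg HA].
  - left. exists i, j. exact HA.
  - right; left. destruct g as [t|]; [|destruct Hs as [[] _]].
    exists t, F. split; [exact (proj1 Hs)|split; assumption].
  - right; right; left. destruct g as [t|]; [|destruct Hs as [[] _]].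
    exists t, F. split; [exact (proj1 Hs)|split; assumption].
  - right; right; right. destruct g as [t|]; [|destruct Hg].
    exists t. split; assumption.
Qed.

Definition univ (K T : Type) (lt : T -> T -> Prop) (b : option T) (U : PP K) : Prop :=
  forall A : (K -> K) -> Prop, Sigma K lt b A ->
    exists xi : K -> K, forall eta : K -> K, A eta <-> U (eta, xi).

Lemma main_claim (K : Type) (iota : nat -> K) (Hi : injective iota)
  (psi : K * K -> K) (Hpsi : injective psi)
  (T : Type) (lt : T -> T -> Prop) (Hwf : well_founded lt)
  (e : T -> K) (He : injective e) :
  forall b, exists U, BorelP K U /\ univ K T lt b U.
Proof.
  assert (H01 : iota 0 <> iota 1) by (intro E; apply Hi in E; discriminate).
  assert (H02 : iota 0 <> iota 2) by (intro E; apply Hi in E; discriminate).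
  assert (H12 : iota 1 <> iota 2) by (intro E; apply Hi in E; discriminate).
  pose (phi := fun d : (K * K) + nat => match d with
                | inl (k, x) => psi (psi (k, iota 0), x)
                | inr n => psi (psi (iota 0, iota 1), iota n) end).
  assert (Hphi : injective phi).
  { intros [[k x]|n] [[k' x']|n'] E; simpl in E.
    - apply Hpsi in E. injection E; intros E2 E1. apply Hpsi in E1.
      injection E1; intros; subst; reflexivity.
    - apply Hpsi in E. injection E; intros _ E1. apply Hpsi in E1.
      injection E1; intros E3 _. exfalso; apply H01; exact E3.
    - apply Hpsi in E. injection E; intros _ E1. apply Hpsi in E1.
      injection E1; intros E3 _. exfalso; apply H01; symmetry; exact E3.
    - apply Hpsi in E. injection E; intros E2. apply Hi in E2. subst; reflexivity. }
  pose (sl := fun k x => phi (inl (k, x))).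
  assert (Hsl : forall k, injective (sl k)).
  { intros k x y E. unfold sl in E. apply Hphi in E. injection E; auto. }
  pose (a0 := phi (inr 0)). pose (b1 := phi (inr 1)). pose (b2 := phi (inr 2)).
  assert (cKK : card_le (K * K) K) by (exists psi; exact Hpsi).
  assert (cK : card_le K K) by (exists (fun x => x); intros x y E; exact E).
  assert (cT : card_le T K) by (exists e; exact He).
  pose (U := fun (V : T -> PP K) (p : (K -> K) * (K -> K)) =>
     (snd p a0 = iota 0 /\ fst p (snd p b1) = snd p b2) \/
     (snd p a0 = iota 1 /\ exists t, snd p b1 = e t /\
         exists k, V t (fst p, fun x => snd p (sl k x))) \/
     (snd p a0 = iota 2 /\ exists t, snd p b1 = e t /\
         forall k, V t (fst p, fun x => snd p (sl k x)))).
  assert (UB : forall V, (forall t, BorelP K (V t)) -> BorelP K (U V)).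
  { intros V HV. unfold U.
    apply (Borel_or K (iota 0) (iota 1) H01); [|apply (Borel_or K (iota 0) (iota 1) H01)].
    - apply (Borel_and K (iota 0) (iota 1) H01).
      + apply (Borel_snd K (iota 0) (iota 1) H01).
      + apply (Borel_ext K (iota 0) (fun p => exists u : K * K,
                 fst p (fst u) = snd u /\ snd p b1 = fst u /\ snd p b2 = snd u)).
        * apply (Borel_ex K (K * K) cKK). intro u.
          apply (Borel_and K (iota 0) (iota 1) H01);
            [apply (Borel_fst K (iota 0) (iota 1) H01)|].
          apply (Borel_and K (iota 0) (iota 1) H01);
            apply (Borel_snd K (iota 0) (iota 1) H01).
        * intro p. split.
          -- intro E. exists (snd p b1, snd p b2). simpl. auto.
          -- intros [[x y] [E1 [E2 E3]]]. simpl in *. rewrite E2, E3. exact E1.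
    - apply (Borel_and K (iota 0) (iota 1) H01).
      + apply (Borel_snd K (iota 0) (iota 1) H01).
      + apply (Borel_ex K T cT). intro t.
        apply (Borel_and K (iota 0) (iota 1) H01).
        * apply (Borel_snd K (iota 0) (iota 1) H01).
        * apply (Borel_ex K K cK). intro k.
          apply (Borel_pre K (iota 0) (sl k) (Hsl k) (V t) (HV t)).
    - apply (Borel_and K (iota 0) (iota 1) H01).
      + apply (Borel_snd K (iota 0) (iota 1) H01).
      + apply (Borel_ex K T cT). intro t.
        apply (Borel_and K (iota 0) (iota 1) H01).
        * apply (Borel_snd K (iota 0) (iota 1) H01).
        * apply (Borel_all K K cK). intro k.
          apply (Borel_pre K (iota 0) (sl k) (Hsl k) (V t) (HV t)). }
  assert (mk : forall (zeta : K -> K -> K) (tg v1 v2 : K), exists xi : K -> K,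
      (forall k, (fun x => xi (sl k x)) = zeta k) /\ xi a0 = tg /\ xi b1 = v1 /\ xi b2 = v2).
  { intros zeta tg v1 v2.
    destruct (build K _ phi Hphi (fun d => match d with
        | inl (k, x) => zeta k x | inr 0 => tg | inr 1 => v1 | inr _ => v2 end)) as [xi Hxi].
    exists xi. split; [|split; [|split]].
    - intro k. apply functional_extensionality. intro x. unfold sl. rewrite Hxi. reflexivity.
    - unfold a0. rewrite Hxi. reflexivity.
    - unfold b1. rewrite Hxi. reflexivity.
    - unfold b2. rewrite Hxi. reflexivity. }
  intro b. induction b as [b IH] using (well_founded_induction (olt_wf T lt Hwf)).
  destruct (choice_fun (fun _ : (K -> K) * (K -> K) => False)
     (fun t V => BorelP K V /\ (olt lt (Some t) b -> univ K T lt (Some t) V))) as [V HV].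
  assert (HV' : forall t, BorelP K (V t) /\ (olt lt (Some t) b -> univ K T lt (Some t) (V t))).
  { intro t. apply HV. destruct (classic (olt lt (Some t) b)) as [Hlt|Hlt].
    - destruct (IH (Some t) Hlt) as [W [HW1 HW2]]. exists W. auto.
    - exists (fun _ => False). split; [apply BP_empty; auto|intro; contradiction]. }
  clear HV.
  exists (U V). split; [apply UB; intro t; exact (proj1 (HV' t))|].
  intros A HA.
  destruct (Sigma_inv K T lt b A HA) as [[i [j Hij]]|[[t [F [Hlt [HF HA']]]]|[[t [F [Hlt [HF HA']]]]|[t [Hlt HAt]]]]].
  - destruct (mk (fun _ x => x) (iota 0) i j) as [xi [_ [E0 [E1 E2]]]].
    exists xi. intro eta. rewrite Hij. unfold U; simpl. rewrite E0, E1, E2. split.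
    + intro H. left. auto.
    + intros [[_ H]|[[H _]|[H _]]]; auto; exfalso; auto.
  - assert (Hun := proj2 (HV' t) Hlt).
    destruct (choice_fun (fun x : K => x)
       (fun k xi => forall eta, F k eta <-> V t (eta, xi))) as [zeta Hz].
    assert (Hz' : forall k eta, F k eta <-> V t (eta, zeta k)).
    { intro k. apply Hz. apply Hun. apply HF. }
    destruct (mk zeta (iota 1) (e t) (e t)) as [xi [Es [E0 [E1 E2]]]].
    exists xi. intro eta. rewrite HA'. unfold U; simpl. rewrite E0, E1. split.
    + intros [k Hk]. right; left. split; [reflexivity|]. exists t. split; [reflexivity|].
      exists k. rewrite Es. apply Hz'. exact Hk.
    + intros [[H _]|[[_ [t' [Et [k Hk]]]]|[H _]]].
      * exfalso; auto.
      * apply He in Et. subst t'. rewrite Es in Hk. exists k. apply Hz'. exact Hk.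
      * exfalso; auto.
  - assert (Hun := proj2 (HV' t) Hlt).
    destruct (choice_fun (fun x : K => x)
       (fun k xi => forall eta, F k eta <-> V t (eta, xi))) as [zeta Hz].
    assert (Hz' : forall k eta, F k eta <-> V t (eta, zeta k)).
    { intro k. apply Hz. apply Hun. apply HF. }
    destruct (mk zeta (iota 2) (e t) (e t)) as [xi [Es [E0 [E1 E2]]]].
    exists xi. intro eta. rewrite HA'. unfold U; simpl. rewrite E0, E1. split.
    + intros Hk. right; right. split; [reflexivity|]. exists t. split; [reflexivity|].
      intro k. rewrite Es. apply Hz'. apply Hk.
    + intros [[H _]|[[H _]|[_ [t' [Et Hk]]]]].
      * exfalso; auto.
      * exfalso; auto.
      * apply He in Et. subst t'. intro k. apply Hz'. rewrite <- Es. apply Hk.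
  - destruct (proj2 (HV' t) Hlt A HAt) as [xA HxA].
    destruct (mk (fun _ => xA) (iota 1) (e t) (e t)) as [xi [Es [E0 [E1 E2]]]].
    exists xi. intro eta. rewrite HxA. unfold U; simpl. rewrite E0, E1. split.
    + intro Hk. right; left. split; [reflexivity|]. exists t. split; [reflexivity|].
      exists (iota 0). rewrite Es. exact Hk.
    + intros [[H _]|[[_ [t' [Et [k Hk]]]]|[H _]]].
      * exfalso; auto.
      * apply He in Et. subst t'. rewrite Es in Hk. exact Hk.
      * exfalso; auto.
Qed.

Theorem lemma3p16 (K : Type) (HK : regular K)
  (T : Type) (lt : T -> T -> Prop) (Hwo : well_order lt) (HT : card_le T K) :
  exists R : (K -> K) * (K -> K) -> Prop,
    BorelP K R /\
    forall A : (K -> K) -> Prop, Sigma K lt None A ->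
      exists xi : K -> K, forall eta : K -> K, A eta <-> R (eta, xi).
Proof.
  destruct HK as [[iota Hi] _].
  destruct (hess K iota Hi) as [psi Hpsi].
  destruct HT as [e He].
  destruct Hwo as [_ [_ [_ Hwf]]].
  destruct (main_claim K iota Hi psi Hpsi T lt Hwf e He None) as [U [HU1 HU2]].
  exists U. split; [exact HU1|exact HU2].
Qed.
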